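(* Let $G$ be a finite group and $p$ a prime; all sums below are over nonidentity $p$-subgroups of $G$. Then: (i) $\mathcal S^*_G$ has weighting $k^H=\sum_K\mu(H,K)$, coweighting $k_K=-\mu(K)$, and $\chi(\mathcal S^*_G)=|G|\chi(\mathcal T^*_G)$. (ii) $\mathcal T^*_G$ has weighting $k^H=|G|^{-1}\sum_K\mu(H,K)$, coweighting $k_K=-|G|^{-1}\mu(K)$, and $\chi(\mathcal T^*_G)=\sum_{[K]}\frac{-\mu(K)}{|\mathcal T^*_G(K)|}$. (iii) $\mathcal L^*_G$ has weighting $k^H=|G|^{-1}\sum_K\mu(H,K)|O^pC_G(K)|$, coweighting $k_K=-|G|^{-1}\mu(K)|O^pC_G(K)|$, and $\chi(\mathcal L^*_G)=\sum_{[K]}\frac{-\mu(K)}{|\mathcal L^*_G(K)|}$. (iv) $\mathcal F^*_G$ has weighting $k^H=|G|^{-1}\sum_K\mu(H,K)|C_G(K)|$, coweighting $k_K=-|G|^{-1}\mu(K)|C_G(K)|$, and $\chi(\mathcal F^*_G)=\sum_{[K]}\frac{-\mu(K)}{|\mathcal F^*_G(K)|}$. (v) $\mathcal O^*_G$ has weighting $k^H=|G|^{-1}|H|\sum_K\mu(H,K)$, coweighting $k_K=|G|^{-1}\sum_H|H|\mu(H,K)$, and $\chi(\mathcal O^*_G)=|G|^{-1}\sum_{H,K}|H|\mu(H,K)$. Here $\sum_{[K]}$ runs over the $G$-conjugacy classes of nonidentity $p$-subgroups $K$.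
   Context: For subgroups $H,K\le G$ write $N_G(H,K)=\{g\in G: g^{-1}Hg\le K\}$; $O^p(X)$ is the smallest normal subgroup of a finite group $X$ with $p$-group quotient. Categories with objects the nonidentity $p$-subgroups of $G$ and composition induced by multiplication in $G$: $\mathcal S^*_G$ the poset under inclusion; $\mathcal T^*_G(H,K)=N_G(H,K)$; $\mathcal L^*_G(H,K)=O^p(C_G(H))\backslash N_G(H,K)$; $\mathcal F^*_G(H,K)=C_G(H)\backslash N_G(H,K)$; $\mathcal O^*_G(H,K)=N_G(H,K)/K$; $\mathcal C(K)=\mathcal C(K,K)$. Leinster: for a finite category $\mathcal C$, a weighting is $k^\bullet$ with $\sum_b|\mathcal C(a,b)|k^b=1$ for all $a$, a coweighting is $k_\bullet$ with $\sum_ak_a|\mathcal C(a,b)|=1$ for all $b$, and if both exist $\chi(\mathcal C)=\sum_bk^b=\sum_ak_a$. $\mu(H,K)$ is the Möbius function of the poset of all subgroups of $G$ ($\mu(H,H)=1$, $\mu(H,K)=-\sum_{H\le L<K}\mu(H,L)$ for $H<K$, $0$ if $H\not\le K$), $\mu(K)=\mu(1,K)$. *)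

(* Defs.v *)
From HB Require Import structures.
From mathcomp Require Import all_boot all_order all_algebra all_fingroup all_solvable.
From Stdlib Require Import ClassicalEpsilon.
Set Implicit Arguments. Unset Strict Implicit. Unset Printing Implicit Defensive.
Import GRing.Theory Num.Theory.
Local Open Scope ring_scope.

Section Defs.
Variable gT : finGroupType.

(* mu_fuel n H K computes mu(H,K) by the defining recursion
   mu(H,H)=1, mu(H,K) = - sum_{H <= L < K} mu(H,L), mu(H,K)=0 if H not <= K;
   the fuel n = #|K| suffices since L \proper K implies #|L| < #|K|. *)
Fixpoint mu_fuel (n : nat) (H K : {group gT}) : rat :=
  if H == K then 1%R
  else if ~~ (H \subset K) then 0%R
  else match n with
       | 0%N => 0%R
       | n'.+1 => - \sum_(L : {group gT} | (H \subset L) && (L \proper K)) mu_fuel n' H L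
       end.

Definition mu (H K : {group gT}) : rat := mu_fuel #|K| H K.

Definition mu1 (K : {group gT}) : rat := mu 1%G K.

Definition Oup (p : nat) (X : {set gT}) : {set gT} :=
  \bigcap_(N : {group gT} | (N <| X)%g && (p.-group (X / N))%g) N.

Variables (G : {group gT}) (p : nat).

Definition pobj : {set {group gT}} :=
  [set H : {group gT} | [&& H \subset G, (p.-group H)%g & H :!=: 1%g]].

(* N_G(H,K) = {g in G | g^-1 H g <= K}  (H :^ g = g^-1 H g in mathcomp) *)
Definition NGHK (H K : {group gT}) : {set gT} := [set g in G | (H :^ g)%g \subset K].

(* cardinalities of hom-sets of the five categories *)
Definition homS (H K : {group gT}) : nat := H \subset K.
Definition homT (H K : {group gT}) : nat := #|NGHK H K|.
Definition homL (H K : {group gT}) : nat := #|rcosets (Oup p 'C_G(H)%g) (NGHK H K)|.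
Definition homF (H K : {group gT}) : nat := #|rcosets 'C_G(H)%g (NGHK H K)|.
Definition homO (H K : {group gT}) : nat := #|lcosets K (NGHK H K)|.

Definition pclasses : {set {set {group gT}}} := [set orbit 'JG%act G%g K | K in pobj].
Definition crep (X : {set {group gT}}) : {group gT} := odflt 1%G [pick K in X].

End Defs.

Section Leinster.
Variable gT : finGroupType.
Variables (obj : {set {group gT}}) (hom : {group gT} -> {group gT} -> nat).

Definition is_weighting (k : {group gT} -> rat) : Prop :=
  forall a, a \in obj -> \sum_(b in obj) (hom a b)%:R * k b = 1.

Definition is_coweighting (k : {group gT} -> rat) : Prop :=
  forall b, b \in obj -> \sum_(a in obj) k a * (hom a b)%:R = 1.

(* x is the Euler characteristic: a weighting and a coweighting exist and
   the sum of the weighting is x (this is independent of the choices). *)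
Definition euler_char_is (x : rat) : Prop :=
  exists kw kc, is_weighting kw /\ is_coweighting kc /\ \sum_(b in obj) kw b = x.

Definition chi : rat := epsilon (inhabits 0) euler_char_is.
End Leinster.

(* Main.v *)
Require Import Defs.
From HB Require Import structures.
From mathcomp Require Import all_boot all_order all_algebra all_fingroup all_solvable.
From mathcomp Require Import ring.
Import GRing.Theory Num.Theory.
Set Implicit Arguments. Unset Strict Implicit. Unset Printing Implicit Defensive.
Local Open Scope ring_scope.

Section Mob.
Variable gT : finGroupType.
Implicit Types H K L : {group gT}.

Lemma mu_fuel_stable n m H K : (#|K| <= n)%N -> (#|K| <= m)%N ->
  mu_fuel n H K = mu_fuel m H K.
Proof.
elim: n m K => [|n IH] m K hn hm; first by have := cardG_gt0 K; rewrite leqNgt ltnS hn.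
case: m hm => [|m] hm; first by have := cardG_gt0 K; rewrite leqNgt ltnS hm.
rewrite /=; case: (H == K) => //; case: (H \subset K) => //=.
congr (- _); apply: eq_bigr => L /andP[_ pLK].
have lt := proper_card pLK.
by apply: IH; rewrite -ltnS; apply: leq_trans lt _.
Qed.

Lemma muE H K : mu H K = if H == K then 1 else if ~~ (H \subset K) then 0
   else - \sum_(L : {group gT} | (H \subset L) && (L \proper K)) mu H L.
Proof.
rewrite /mu; have := cardG_gt0 K; case E: #|K| => [|n] // _ /=.
case: (H == K) => //; case: (H \subset K) => //=.
congr (- _); apply: eq_bigr => L /andP[_ pLK].
have lt := proper_card pLK; rewrite E ltnS in lt.
by apply: mu_fuel_stable.
Qed.

Lemma mu0 H K : ~~ (H \subset K) -> mu H K = 0.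
Proof.
move=> nHK; rewrite muE (negPf nHK) /=.
case: eqP => // eHK; by rewrite eHK subxx in nHK.
Qed.

Lemma geq_group H K : (H \subset K) && (K \subset H) = (H == K).
Proof. by rewrite -val_eqE /= eqEsubset. Qed.

Lemma mob_left H K : \sum_(L : {group gT}) mu H L * (L \subset K)%:R = (H == K)%:R.
Proof.
rewrite (eq_bigr (fun L => if (H \subset L) && (L \subset K) then mu H L else 0)); last first.
  move=> L _; case: (boolP (H \subset L)) => hL /=; last by rewrite mu0 // mul0r.
  by case: (L \subset K); rewrite ?mulr1 ?mulr0.
rewrite -big_mkcond /=.
case: (boolP (H \subset K)) => sHK; last first.
  rewrite big_pred0; last by move=> L; apply/negP => /andP[a b]; case/negP: sHK; apply: subset_trans a b.
  by case: eqP => // e; rewrite e subxx in sHK.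
case: (eqVneq H K) => [<-|nHK].
  rewrite (big_pred1 H) ?muE ?eqxx // => L.
  by rewrite geq_group eq_sym.
rewrite (bigD1 K) /=; last by rewrite sHK subxx.
rewrite muE (negPf nHK) sHK /= addrC.
apply/eqP; rewrite subr_eq0; apply/eqP; apply: eq_bigl => L.
by rewrite -andbA properEneq [(_ != _) && _]andbC -val_eqE.
Qed.

Lemma sum_groups_ord (F : {group gT} -> rat) :
  \sum_(L : {group gT}) F L = \sum_(i < #|{: {group gT}}|) F (enum_val i).
Proof. by rewrite (big_enum_val F). Qed.

Lemma mob_right H K : \sum_(L : {group gT}) (H \subset L)%:R * mu L K = (H == K)%:R.
Proof.
pose n := #|{: {group gT}}|.
pose ev := fun i : 'I_n => (enum_val i : {group gT}).
pose Mm := \matrix_(i < n, j < n) mu (ev i) (ev j).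
pose Zm := \matrix_(i < n, j < n) ((ev i \subset ev j)%:R : rat).
have MZ : Mm *m Zm = 1%:M.
  apply/matrixP => i j; rewrite !mxE.
  rewrite (eq_bigr (fun k => mu (ev i) (ev k) * (ev k \subset ev j)%:R)); last by move=> k _; rewrite !mxE.
  rewrite -(sum_groups_ord (fun L => mu (ev i) L * (L \subset ev j)%:R)) mob_left.
  by rewrite (inj_eq (bij_inj (@enum_val_bij _))).
have ZM := mulmx1C MZ.
have := congr1 (fun A : 'M[rat]_n => A (enum_rank H) (enum_rank K)) ZM; rewrite /= !mxE.
rewrite (eq_bigr (fun k => (ev (enum_rank H) \subset ev k)%:R * mu (ev k) (ev (enum_rank K)))); last by move=> k _; rewrite !mxE.
rewrite -(sum_groups_ord (fun L => (ev (enum_rank H) \subset L)%:R * mu L (ev (enum_rank K)))).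
rewrite /ev !enum_rankK (inj_eq enum_rank_inj).
by [].
Qed.

Lemma conjG_bij x : bijective (fun L : {group gT} => (L :^ x)%G).
Proof.
by exists (fun L : {group gT} => (L :^ x^-1)%G) => L; apply: val_inj; rewrite /= ?conjsgK ?conjsgKV.
Qed.

Lemma conjG_eq x H K : ((H :^ x)%G == (K :^ x)%G) = (H == K).
Proof. exact: (inj_eq (bij_inj (conjG_bij x)) H K). Qed.

Lemma muJ x H K : mu (H :^ x)%G (K :^ x)%G = mu H K.
Proof.
move: {2}#|K| (leqnn #|K|) => n; elim: n K => [|n IH] K hK.
  by have := cardG_gt0 K; rewrite leqNgt ltnS hK.
rewrite muE [RHS]muE conjG_eq /= conjSg.
case: (H == K) => //; case: (H \subset K) => //=; congr (- _).
rewrite (reindex (fun L : {group gT} => (L :^ x)%G)) /=; last exact: onW_bij (conjG_bij x).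
apply: eq_big => L; first by rewrite /= conjSg properJ.
move=> /andP[_]; rewrite properJ => pLK; apply: IH; have := leq_trans (proper_card pLK) hK.
by rewrite ltnS.
Qed.

End Mob.
Section Cosets.
Variable gT : finGroupType.
Implicit Types (A N : {set gT}) (H K : {group gT}).
Local Open Scope group_scope.

Lemma rcosets_partition_mulA H A : partition (rcosets H A) (H * A).
Proof.
set HG := H * A; have sGHG: {subset A <= HG} by apply/subsetP/mulG_subr.
have defHx x: x \in HG -> [set y in HG | rcoset H x == rcoset H y] = H :* x.
  move=> HGx; apply/setP=> y; rewrite inE !rcosetE (sameP eqP rcoset_eqP).
  by rewrite rcoset_sym; apply/andb_idl/subsetP; rewrite mulGS sub1set.
have:= preim_partitionP (rcoset H) HG; congr (partition _ _); apply/setP=> Hx.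
apply/imsetP/idP=> [[x HGx ->] | ]; first by rewrite defHx // mem_rcosets.
by case/rcosetsP=> x /sGHG-HGx ->; exists x; rewrite ?defHx.
Qed.

Lemma card_rcosets_sub H N : H * N \subset N -> (#|rcosets H N| * #|H| = #|N|)%N.
Proof.
move=> sHN; have eN : H * N = N by apply/eqP; rewrite eqEsubset sHN mulG_subr.
rewrite -{2}eN (card_uniform_partition (n := #|H|) _ (rcosets_partition_mulA H N)) //.
by move=> _ /rcosetsP[x _ ->]; rewrite card_rcoset.
Qed.

Lemma card_lcosets_sub K N : N * K \subset N -> (#|lcosets K N| * #|K| = #|N|)%N.
Proof.
move=> sNK; rewrite -(card_invg (lcosets K N)) invg_lcosets invGid -[RHS](card_invg N).
apply: card_rcosets_sub; rewrite -invSg invMg invGid invgK.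
by [].
Qed.
End Cosets.

From Stdlib Require Import ClassicalEpsilon.

Section Chi.
Variable gT : finGroupType.
Variables (obj : {set {group gT}}) (hom : {group gT} -> {group gT} -> nat).

Lemma wc_sum kw kc : is_weighting obj hom kw -> is_coweighting obj hom kc ->
  \sum_(b in obj) kw b = \sum_(a in obj) kc a.
Proof.
move=> w c.
rewrite (eq_bigr (fun b => (\sum_(a in obj) kc a * (hom a b)%:R) * kw b)); last first.
  by move=> b bO; rewrite c // mul1r.
have -> : \sum_(a in obj) kc a = \sum_(a in obj) kc a * \sum_(b in obj) (hom a b)%:R * kw b.
  by apply: eq_bigr => a aO; rewrite w // mulr1.
rewrite (eq_bigr (fun b => \sum_(a in obj) kc a * (hom a b)%:R * kw b)); last by move=> b _; rewrite mulr_suml.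
rewrite exchange_big /=; apply: eq_bigr => a _; rewrite mulr_sumr; apply: eq_bigr => b _.
by rewrite mulrA.
Qed.

Lemma chi_eq kw kc : is_weighting obj hom kw -> is_coweighting obj hom kc ->
  chi obj hom = \sum_(a in obj) kc a.
Proof.
move=> w c.
have Ex : exists x, euler_char_is obj hom x by exists (\sum_(b in obj) kw b); exists kw, kc.
have := epsilon_spec (inhabits 0) (euler_char_is obj hom) Ex.
rewrite /chi; case=> kw' [kc' [w' [c' <-]]].
exact: wc_sum w' c.
Qed.
End Chi.

Section Main.
Variables (gT : finGroupType) (G : {group gT}) (p : nat).
Local Notation O := (pobj G p).
Local Open Scope group_scope.
Local Open Scope ring_scope.
Implicit Types a b H K L : {group gT}.

Lemma inO_sub a b K : a \in O -> K \in O -> a \subset b -> b \subset K -> b \in O.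
Proof.
rewrite !inE => /and3P[_ _ na] /and3P[sKG pK _] ab bK; apply/and3P; split.
- exact: subset_trans bK sKG.
- exact: pgroupS bK pK.
- apply/negP => /eqP b1; case/negP: na; by rewrite -subG1 -b1.
Qed.

Lemma inOJ a x : x \in G -> ((a :^ x)%G \in O) = (a \in O).
Proof.
move=> Gx; rewrite !inE /= -{1}(conjGid Gx) conjSg pgroupJ.
by rewrite !trivg_card1 cardJg.
Qed.

Lemma sumOJ (F : {group gT} -> rat) x : x \in G ->
  \sum_(a in O) F a = \sum_(a in O) F (a :^ x)%G.
Proof.
move=> Gx; rewrite (reindex (fun L => (L :^ x)%G)) /=; last exact: onW_bij (conjG_bij x).
by apply: eq_bigl => a; rewrite inOJ.
Qed.

Lemma homTE a b : (homT G a b)%:R = \sum_(x in G) (((a :^ x)%g \subset b)%:R : rat).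
Proof.
rewrite /homT /NGHK -sum1_card natr_sum [LHS]big_mkcond [RHS]big_mkcond /=.
apply: eq_bigr => y _; rewrite inE; case: (y \in G) => //=.
by case: (_ \subset _).
Qed.

Lemma sumO_eq c (F : {group gT} -> rat) :
  \sum_(K in O) (c == K)%:R * F K = (c \in O)%:R * F c.
Proof.
case: (boolP (c \in O)) => cO.
  rewrite (bigD1 c) //= eqxx mul1r big1 ?addr0 ?mul1r // => K /andP[_ nK].
  by rewrite eq_sym (negPf nK) mul0r.
rewrite mul0r big1 // => K KO; case: eqP => [e|_]; last by rewrite mul0r.
by rewrite e KO in cO.
Qed.

Lemma W_core a K : a \in O -> K \in O ->
  \sum_(b in O) (a \subset b)%:R * mu b K = (a == K)%:R.
Proof.
move=> aO KO; rewrite -(mob_right a K) big_mkcond /=; apply: eq_bigr => b _.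
case: (boolP (b \in O)) => // bO.
case: (boolP (a \subset b)) => ab; last by rewrite mul0r.
case: (boolP (b \subset K)) => bK; last by rewrite mu0 // mulr0.
by rewrite (inO_sub aO KO ab bK) in bO.
Qed.

Lemma eqG1 L : (L == 1%G) = (L :==: 1%g).
Proof. by rewrite -val_eqE. Qed.

Lemma CW_core b : b \in O -> \sum_(a in O) mu1 a * (a \subset b)%:R = -1.
Proof.
move=> bO; have := mob_left 1%G b.
rewrite (bigD1 1%G) //= sub1G muE eqxx mul1r.
have -> : (1%G == b) = false.
  move: bO; rewrite inE eq_sym => /and3P[_ _] h; apply/negbTE; by rewrite -val_eqE.
move=> e; have {}e : \sum_(i | i != 1%G) mu 1 i * (i \subset b)%:R = -1.
  apply: (addrI 1); rewrite subrr; move: e => /=; by rewrite mulr1n mulr0n.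
rewrite -{}e /mu1.
rewrite [LHS]big_mkcond [RHS]big_mkcond /=; apply: eq_bigr => L _.
case: (boolP (L \in O)) => LO.
  by move: LO; rewrite inE eqG1 => /and3P[_ _ ->].
case: eqP => // /eqP nL; case: (boolP (L \subset b)) => Lb; last by rewrite mulr0.
suff : L \in O by rewrite (negPf LO).
move: bO; rewrite !inE => /and3P[sbG pb _]; rewrite -eqG1 nL andbT.
by rewrite (subset_trans Lb sbG) (pgroupS Lb pb).
Qed.

Lemma S5_core b : b \in O ->
  \sum_(a in O) (\sum_(H in O) #|H|%:R * mu H a) * (a \subset b)%:R = #|b|%:R.
Proof.
move=> bO.
under eq_bigr do rewrite mulr_suml.
rewrite exchange_big /=.
rewrite (eq_bigr (fun H => (b == H)%:R * #|H|%:R)).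
  by rewrite sumO_eq bO mul1r.
move=> H HO; rewrite eq_sym -(mob_left H b) mulr_suml big_mkcond /=; apply: eq_bigr => a _.
case: (boolP (a \in O)) => aO; first by rewrite [RHS]mulrC mulrA.
case: (boolP (H \subset a)) => Ha; last by rewrite mu0 // !mul0r.
case: (boolP (a \subset b)) => ab; last by rewrite mulr0 mul0r.
by rewrite (inO_sub HO bO Ha ab) in aO.
Qed.


Definition Jinv (F : {group gT} -> rat) :=
  forall a x, x \in G -> a \in O -> F (a :^ x)%G = F a.

Lemma T_cow (F : {group gT} -> rat) b : Jinv F -> b \in O ->
  \sum_(a in O) F a * (homT G a b)%:R = #|G|%:R * \sum_(a in O) F a * (a \subset b)%:R.
Proof.
move=> FJ bO.
under eq_bigr do rewrite homTE mulr_sumr.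
rewrite exchange_big /= mulr_natl -sumr_const; apply: eq_bigr => x Gx.
rewrite (sumOJ _ (groupVr Gx)); apply: eq_bigr => a aO.
by rewrite /= conjsgKV FJ ?groupV.
Qed.

Lemma T_w (c : {group gT} -> rat) a : Jinv c -> a \in O ->
  \sum_(b in O) (homT G a b)%:R * \sum_(K in O) mu b K * c K = #|G|%:R * c a.
Proof.
move=> cJ aO.
under eq_bigr do rewrite homTE mulr_suml.
rewrite exchange_big /= mulr_natl -sumr_const; apply: eq_bigr => x Gx.
have axO : (a :^ x)%G \in O by rewrite inOJ.
under eq_bigr do rewrite mulr_sumr.
rewrite exchange_big /=.
rewrite (eq_bigr (fun K => ((a :^ x)%G == K)%:R * c K)).
  by rewrite sumO_eq axO mul1r cJ.
move=> K KO; rewrite -(W_core axO KO) mulr_suml; apply: eq_bigr => b _.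
by rewrite mulrA.
Qed.

Lemma Oup_group_set (X : {set gT}) : group_set (Oup p X).
Proof. exact: group_set_bigcap. Qed.
Canonical Oup_group (X : {set gT}) := group (Oup_group_set X).

Lemma Oup_sub (X : {group gT}) : Oup p X \subset X.
Proof.
rewrite /Oup (bigcap_inf X) // normal_refl /= trivg_quotient.
exact: pgroup1.
Qed.

Lemma OupJ (X : {group gT}) x : Oup p (X :^ x)%g = (Oup p X :^ x)%g.
Proof.
rewrite /Oup -bigcapJ (reindex (fun N => (N :^ x)%G)) /=; last exact: onW_bij (conjG_bij x).
apply: eq_bigl => N /=; rewrite normalJ; case nN: (N <| X) => //=.
have nXN := normal_norm nN.
rewrite /pgroup !card_quotient ?indexJg // normJ conjSg //.
Qed.

Lemma CJ a x : x \in G -> ('C_G(a :^ x) = 'C_G(a) :^ x)%g.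
Proof. by move=> Gx; rewrite conjIg centJ conjGid. Qed.

Lemma Jinv_C : Jinv (fun K => (#|'C_G(K)|%:R : rat)).
Proof. by move=> a x Gx _ /=; rewrite CJ // cardJg. Qed.

Lemma Jinv_Cp : Jinv (fun K => (#|Oup p 'C_G(K)|%:R : rat)).
Proof. by move=> a x Gx _ /=; rewrite CJ // OupJ cardJg. Qed.

Lemma Jinv_mu1 : Jinv (@mu1 gT).
Proof.
move=> a x Gx _; rewrite /mu1 -(muJ x 1%G a); congr (mu _ _).
by apply: val_inj; rewrite /= conjs1g.
Qed.

Lemma Jinv_1 : Jinv (fun _ => 1).
Proof. by []. Qed.

Lemma Jinv_mul (F1 F2 : {group gT} -> rat) : Jinv F1 -> Jinv F2 -> Jinv (fun K => F1 K * F2 K).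
Proof. by move=> h1 h2 a x Gx aO; rewrite h1 ?h2. Qed.

Lemma Jinv_S5 : Jinv (fun a => \sum_(H in O) #|H|%:R * mu H a).
Proof.
move=> a x Gx aO /=; rewrite (sumOJ _ Gx); apply: eq_bigr => H _.
by rewrite muJ cardJg.
Qed.

Lemma NGHK_mulC (A : {group gT}) a b : A \subset 'C_G(a) ->
  (A * NGHK G a b \subset NGHK G a b)%g.
Proof.
move=> sA; apply/subsetP => y /mulsgP[c g cA gN ->].
have /setIP[cG cC] := subsetP sA c cA.
move: gN; rewrite !inE => /andP[gG ag]; rewrite groupM //=.
have -> : (a :^ (c * g) = a :^ g)%g.
  by rewrite conjsgM; congr (_ :^ _)%g; apply/normP; apply: (subsetP (cent_sub a)).
by [].
Qed.

Lemma homL_T a b : (homL G p a b * #|Oup p 'C_G(a)| = homT G a b)%N.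
Proof.
rewrite /homL /homT card_rcosets_sub //.
apply: NGHK_mulC; exact: Oup_sub.
Qed.

Lemma homF_T a b : (homF G a b * #|'C_G(a)| = homT G a b)%N.
Proof. by rewrite /homF /homT card_rcosets_sub //; apply: NGHK_mulC. Qed.

Lemma homO_T a b : b \in O -> (homO G a b * #|b| = homT G a b)%N.
Proof.
move=> bO; rewrite /homO /homT card_lcosets_sub //.
have sbG : b \subset G by move: bO; rewrite inE => /and3P[].
apply/subsetP => y /mulsgP[g k gN kb ->].
have kG := subsetP sbG k kb.
move: gN; rewrite !inE => /andP[gG ag]; rewrite groupM //=.
by rewrite conjsgM -(conjGid kb) conjSg.
Qed.

Lemma homT_N K : homT G K K = #|'N_G(K)|.
Proof.
rewrite /homT /NGHK; apply: eq_card => y; rewrite !inE.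
by [].
Qed.

Lemma crepO X : X \in pclasses G p -> crep X \in O /\ X = orbit 'JG G (crep X).
Proof.
case/imsetP => K0 K0O ->.
set c := crep (orbit 'JG G K0).
have cX : c \in orbit 'JG G K0.
  rewrite /c /crep; case: pickP => [//|h]; have := h K0; by rewrite orbit_refl.
split; last by apply/esym/orbit_eqP.
by case/orbitP: cX => y Gy <-; rewrite inOJ.
Qed.

Lemma class_sum (F : {group gT} -> rat) : Jinv F ->
  \sum_(K in O) F K = \sum_(X in pclasses G p) #|G : 'N(crep X)|%:R * F (crep X).
Proof.
move=> FJ.
have actO : [acts G, on O | 'JG].
  apply/actsP => x Gx K /=; exact: inOJ.
have := orbit_partition actO; case/and3P => /eqP cov triv _.
rewrite -{1}cov big_trivIset //.
apply: eq_bigr => X XP; have [cO eX] := crepO XP.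
rewrite (eq_bigr (fun _ => F (crep X))); last first.
  by move=> K; rewrite {1}eX => /orbitP[y Gy <-] /=; apply: FJ.
by rewrite big_const iter_addr_0 [in #|X|]eX card_orbit astab1JG indexgI mulr_natl.
Qed.

Lemma gnz : (#|G|%:R : rat) != 0.
Proof. by rewrite pnatr_eq0 -lt0n cardG_gt0. Qed.

Lemma gen_w (h : {group gT} -> {group gT} -> nat) (c d : {group gT} -> rat) :
  Jinv c -> (forall a, a \in O -> c a != 0) ->
  (forall a b, a \in O -> b \in O -> (h a b)%:R * d b * c a = (homT G a b)%:R) ->
  is_weighting O h (fun b => #|G|%:R^-1 * d b * \sum_(K in O) mu b K * c K).
Proof.
move=> cJ cnz hT a aO.
have ca := cnz a aO; have gn := gnz.
transitivity ((#|G|%:R * c a)^-1 * \sum_(b in O) (homT G a b)%:R * \sum_(K in O) mu b K * c K).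
  rewrite mulr_sumr; apply: eq_bigr => b bO; rewrite -(hT a b aO bO).
  by field; apply/andP.
by rewrite T_w // mulVf // mulf_neq0.
Qed.

Lemma gen_cw (h : {group gT} -> {group gT} -> nat) (c : {group gT} -> rat) :
  (forall a b, a \in O -> b \in O -> (h a b)%:R * c a = (homT G a b)%:R) ->
  is_coweighting O h (fun a => - (#|G|%:R^-1 * mu1 a * c a)).
Proof.
move=> hT b bO; have gn := gnz.
transitivity (- #|G|%:R^-1 * \sum_(a in O) mu1 a * (homT G a b)%:R).
  rewrite mulr_sumr; apply: eq_bigr => a aO; rewrite -hT //.
  by ring.
rewrite T_cow ?CW_core //; last exact: Jinv_mu1.
by field.
Qed.

Lemma cw5 : is_coweighting O (homO G) (fun K => #|G|%:R^-1 * \sum_(H in O) #|H|%:R * mu H K).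
Proof.
move=> b bO; have gn := gnz.
have bn : (#|b|%:R : rat) != 0 by rewrite pnatr_eq0 -lt0n cardG_gt0.
transitivity ((#|G|%:R * #|b|%:R)^-1 * \sum_(a in O) (\sum_(H in O) #|H|%:R * mu H a) * (homT G a b)%:R).
  rewrite mulr_sumr; apply: eq_bigr => a aO; rewrite -(homO_T a bO) natrM.
  by field; apply/andP.
rewrite T_cow ?S5_core //; last exact: Jinv_S5.
by field; apply/andP.
Qed.

Lemma w1 : is_weighting O (@homS gT) (fun H => \sum_(K in O) mu H K).
Proof.
move=> a aO; rewrite /homS.
under eq_bigr do rewrite mulr_sumr.
rewrite exchange_big /= (eq_bigr (fun K => (a == K)%:R * 1)).
  by rewrite sumO_eq aO mulr1.
by move=> K KO; rewrite mulr1 -(W_core aO KO).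
Qed.

Lemma cw1 : is_coweighting O (@homS gT) (fun K => - mu1 K).
Proof.
move=> b bO; rewrite /homS.
transitivity (- \sum_(a in O) mu1 a * (a \subset b)%:R).
  by rewrite -sumrN; apply: eq_bigr => a _; rewrite mulNr.
by rewrite CW_core // opprK.
Qed.

Lemma class_chi (h : {group gT} -> {group gT} -> nat) (c : {group gT} -> rat) :
  Jinv c -> (forall a, a \in O -> c a != 0) ->
  (forall a b, a \in O -> b \in O -> (h a b)%:R * c a = (homT G a b)%:R) ->
  \sum_(K in O) - (#|G|%:R^-1 * mu1 K * c K) =
  \sum_(X in pclasses G p) (- mu1 (crep X)) / (h (crep X) (crep X))%:R.
Proof.
move=> cJ cnz hT.
rewrite class_sum; last first.
  by move=> a x Gx aO /=; rewrite Jinv_mu1 ?cJ.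
apply: eq_bigr => X XP; have [KO _] := crepO XP.
set K := crep X.
have nz_n : (#|'N_G(K)|%:R : rat) != 0 by rewrite pnatr_eq0 -lt0n cardG_gt0.
have eg : (#|G|%:R : rat) = #|'N_G(K)|%:R * #|G : 'N(K)|%:R by rewrite -natrM LagrangeI.
have en : (#|'N_G(K)|%:R : rat) = (h K K)%:R * c K by rewrite hT // homT_N.
have gn := gnz.
rewrite eg in gn *; rewrite en in gn *.
move: gn; rewrite !mulf_eq0 !negb_or => /andP[/andP[hn cn] inz].
by field; rewrite hn cn inz.
Qed.

Lemma ext_w (obj : {set {group gT}}) (h : {group gT} -> {group gT} -> nat) (k1 k2 : {group gT} -> rat) :
  (forall b, b \in obj -> k1 b = k2 b) -> is_weighting obj h k1 -> is_weighting obj h k2.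
Proof. by move=> e w a aO; rewrite -[RHS](w a aO); apply: eq_bigr => b bO; rewrite e. Qed.

Lemma ext_cw (obj : {set {group gT}}) (h : {group gT} -> {group gT} -> nat) (k1 k2 : {group gT} -> rat) :
  (forall b, b \in obj -> k1 b = k2 b) -> is_coweighting obj h k1 -> is_coweighting obj h k2.
Proof. by move=> e w a aO; rewrite -[RHS](w a aO); apply: eq_bigr => b bO; rewrite e. Qed.
End Main.
Theorem theorem3p2 (gT : finGroupType) (G : {group gT}) (p : nat) (pp : prime p) :
  let O := pobj G p in
  let g := (#|G|%:R : rat) in
  let Cp := fun K : {group gT} => (#|Oup p 'C_G(K)%g|%:R : rat) in
  let C := fun K : {group gT} => (#|'C_G(K)%g|%:R : rat) in
  let H_ := fun H : {group gT} => (#|H|%:R : rat) in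
  (* (i) *)
  [/\ is_weighting O (@homS gT) (fun H => \sum_(K in O) mu H K),
      is_coweighting O (@homS gT) (fun K => - mu1 K)
    & chi O (@homS gT) = g * chi O (homT G)]
  /\
  (* (ii) *)
  [/\ is_weighting O (homT G) (fun H => g^-1 * \sum_(K in O) mu H K),
      is_coweighting O (homT G) (fun K => - (g^-1 * mu1 K))
    & chi O (homT G) =
        \sum_(X in pclasses G p) (- mu1 (crep X)) / (homT G (crep X) (crep X))%:R]
  /\
  (* (iii) *)
  [/\ is_weighting O (homL G p) (fun H => g^-1 * \sum_(K in O) mu H K * Cp K),
      is_coweighting O (homL G p) (fun K => - (g^-1 * mu1 K * Cp K))
    & chi O (homL G p) =
        \sum_(X in pclasses G p) (- mu1 (crep X)) / (homL G p (crep X) (crep X))%:R]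
  /\
  (* (iv) *)
  [/\ is_weighting O (homF G) (fun H => g^-1 * \sum_(K in O) mu H K * C K),
      is_coweighting O (homF G) (fun K => - (g^-1 * mu1 K * C K))
    & chi O (homF G) =
        \sum_(X in pclasses G p) (- mu1 (crep X)) / (homF G (crep X) (crep X))%:R]
  /\
  (* (v) *)
  [/\ is_weighting O (homO G) (fun H => g^-1 * H_ H * \sum_(K in O) mu H K),
      is_coweighting O (homO G) (fun K => g^-1 * \sum_(H in O) H_ H * mu H K)
    & chi O (homO G) = g^-1 * \sum_(H in O) \sum_(K in O) H_ H * mu H K].
Proof.
move=> O g Cp C H_.
have gn : g != 0 := @gnz gT G.
have Cnz : forall a : {group gT}, (#|'C_G(a)%g|%:R : rat) != 0.
  by move=> a; rewrite pnatr_eq0 -lt0n cardG_gt0.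
have Cpnz : forall a : {group gT}, (#|Oup p 'C_G(a)%g|%:R : rat) != 0.
  by move=> a; rewrite pnatr_eq0 -lt0n (cardG_gt0 (Oup_group p 'C_G(a)%g)).
have hT : forall a b : {group gT}, a \in O -> b \in O ->
    (homT G a b)%:R * 1 = (homT G a b)%:R :> rat by move=> *; rewrite mulr1.
have w2 : is_weighting O (homT G) (fun H => g^-1 * \sum_(K in O) mu H K).
  apply: ext_w (@gen_w gT G p (homT G) (fun _ => 1) (fun _ => 1) (@Jinv_1 gT G p) (fun _ _ => oner_neq0 _) _).
    by move=> b _ /=; rewrite mulr1; congr (_ * _); apply: eq_bigr => K _; rewrite mulr1.
  by move=> a b _ _; rewrite !mulr1.
have cw2 : is_coweighting O (homT G) (fun K => - (g^-1 * mu1 K)).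
  apply: ext_cw (@gen_cw gT G p (homT G) (fun _ => 1) hT).
  by move=> b _ /=; rewrite mulr1.
have hL : forall a b : {group gT}, a \in O -> b \in O ->
    (homL G p a b)%:R * Cp a = (homT G a b)%:R.
  by move=> a b _ _; rewrite /Cp -natrM homL_T.
have w3 : is_weighting O (homL G p) (fun H => g^-1 * \sum_(K in O) mu H K * Cp K).
  apply: ext_w (@gen_w gT G p (homL G p) Cp (fun _ => 1) (@Jinv_Cp gT G p) (fun a _ => Cpnz a) _).
    by move=> b _ /=; rewrite mulr1.
  by move=> a b aO bO; rewrite mulr1 hL.
have cw3 : is_coweighting O (homL G p) (fun K => - (g^-1 * mu1 K * Cp K)) := @gen_cw gT G p (homL G p) Cp hL.
have hF : forall a b : {group gT}, a \in O -> b \in O ->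
    (homF G a b)%:R * C a = (homT G a b)%:R.
  by move=> a b _ _; rewrite /C -natrM homF_T.
have w4 : is_weighting O (homF G) (fun H => g^-1 * \sum_(K in O) mu H K * C K).
  apply: ext_w (@gen_w gT G p (homF G) C (fun _ => 1) (@Jinv_C gT G p) (fun a _ => Cnz a) _).
    by move=> b _ /=; rewrite mulr1.
  by move=> a b aO bO; rewrite mulr1 hF.
have cw4 : is_coweighting O (homF G) (fun K => - (g^-1 * mu1 K * C K)) := @gen_cw gT G p (homF G) C hF.
have w5 : is_weighting O (homO G) (fun H => g^-1 * H_ H * \sum_(K in O) mu H K).
  apply: ext_w (@gen_w gT G p (homO G) (fun _ => 1) H_ (@Jinv_1 gT G p) (fun _ _ => oner_neq0 _) _).
    by move=> b _ /=; congr (_ * _); apply: eq_bigr => K _; rewrite mulr1.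
  by move=> a b aO bO; rewrite mulr1 /H_ -natrM (homO_T _ bO).
have cw5 := @cw5 gT G p.
have w1 := @w1 gT G p; have cw1 := @cw1 gT G p.
split; last split; last split; last split.
- split => //.
  rewrite (chi_eq w1 cw1) (chi_eq w2 cw2) mulr_sumr; apply: eq_bigr => K _.
  by rewrite mulrN mulrA mulfV // mul1r.
- split => //; rewrite (chi_eq w2 cw2).
  rewrite -(@class_chi gT G p (homT G) (fun _ => 1) (@Jinv_1 gT G p) (fun _ _ => oner_neq0 _) hT).
  by apply: eq_bigr => K _; rewrite mulr1.
- split => //; rewrite (chi_eq w3 cw3).
  exact: (@class_chi gT G p (homL G p) Cp (@Jinv_Cp gT G p) (fun a _ => Cpnz a) hL).
- split => //; rewrite (chi_eq w4 cw4).
  exact: (@class_chi gT G p (homF G) C (@Jinv_C gT G p) (fun a _ => Cnz a) hF).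
- split => //; rewrite (chi_eq w5 cw5) -mulr_sumr exchange_big /=.
  by congr (_ * _); apply: eq_bigr => H _; apply: eq_bigr => K _.
Qed.
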